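(* Let $m$ be a positive integer and consider the equation \[ \cos\tfrac{2\pi j}{m}+\cos\tfrac{2\pi \ell}{m}=2\cos\tfrac{2\pi j}{m}\cos\tfrac{2\pi \ell}{m} \qquad (\ast)\] in unknowns $(j,\ell)\in\{0,\dots,m-1\}^2$. If $4\mid m$, then $(\ast)$ has at least $4$ non-trivial solutions. If $5\mid m$, then $(\ast)$ has at least $8$ non-trivial solutions.
   Context: The solution $(j,\ell)=(0,0)$ of $(\ast)$ is called trivial; all other solutions are non-trivial. *)

(* Defs.v *)
From Stdlib Require Import Reals Lra Lia List.
Open Scope R_scope.

Definition star_eq (m j l : nat) : Prop :=
  let a := cos (2 * PI * INR j / INR m) in
  let b := cos (2 * PI * INR l / INR m) in
  a + b = 2 * a * b.

Definition nontrivial_sol (m : nat) (p : nat * nat) : Prop :=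
  (fst p < m)%nat /\ (snd p < m)%nat /\ p <> (0%nat, 0%nat) /\ star_eq m (fst p) (snd p).

Definition at_least_nontrivial (m k : nat) : Prop :=
  exists s : list (nat * nat),
    NoDup s /\ (k <= length s)%nat /\ Forall (nontrivial_sol m) s.

(* Main.v *)
Require Import Defs.
From Stdlib Require Import Reals Lra Lia List Arith.

Lemma angle q c d : (0<q)%nat -> (0<d)%nat ->
  2*PI*INR (c*q) / INR (q*d) = 2*PI*INR c/INR d.
Proof.
  intros Hq Hd. rewrite !mult_INR.
  assert (INR q <> 0) by (apply not_0_INR; lia).
  assert (INR d <> 0) by (apply not_0_INR; lia).
  field; auto.
Qed.

Lemma cos2PIm x : cos (2*PI - x) = cos x.
Proof. rewrite cos_minus, cos_2PI, sin_2PI. ring. Qed.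

Lemma cos_triple x : cos (3*x) = 4 * cos x ^ 3 - 3 * cos x.
Proof.
  replace (3*x) with (2*x + x) by ring.
  rewrite cos_plus, cos_2a_cos, sin_2a.
  assert (H : sin x * sin x = 1 - cos x * cos x).
  { pose proof (sin2_cos2 x). unfold Rsqr in *. lra. }
  transitivity ((2 * cos x * cos x - 1) * cos x - 2 * (sin x * sin x) * cos x).
  - ring.
  - rewrite H. ring.
Qed.

Lemma five_rel : let a := cos (2*PI/5) in 4*a^3 - 3*a = 2*a^2 - 1.
Proof.
  cbv zeta. rewrite <- cos_triple.
  replace (2*(cos (2*PI/5))^2 -1) with (cos (2*(2*PI/5))).
  - replace (3*(2*PI/5)) with (2*PI - 2*(2*PI/5)) by field.
    apply cos2PIm.
  - rewrite cos_2a_cos. ring.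
Qed.

Theorem lemmaA1 (m : nat) (hm : (0 < m)%nat) :
  ((Nat.divide 4 m) -> at_least_nontrivial m 4) /\
  ((Nat.divide 5 m) -> at_least_nontrivial m 8).
Proof.
  split.
  - intros [q Hq]. subst m.
    assert (Hq : (0<q)%nat) by lia.
    exists ((1*q,1*q)::(1*q,3*q)::(3*q,1*q)::(3*q,3*q)::nil)%nat.
    assert (E1 : cos (2*PI*INR (1*q)/INR (q*4)) = 0).
    { rewrite angle by lia. replace (2*PI*INR 1/INR 4) with (PI/2) by (simpl; field).
      apply cos_PI2. }
    assert (E3 : cos (2*PI*INR (3*q)/INR (q*4)) = 0).
    { rewrite angle by lia. replace (2*PI*INR 3/INR 4) with (2*PI - PI/2) by (simpl; field).
      rewrite cos2PIm. apply cos_PI2. }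
    split; [|split].
    + repeat constructor; simpl; intuition;
      match goal with H : (_,_) = (_,_) |- _ => injection H; lia end.
    + simpl; lia.
    + repeat apply Forall_cons; try apply Forall_nil; unfold nontrivial_sol;
      cbn [fst snd]; (split; [lia|split; [lia|split; [intro H; injection H; lia|]]]);
      unfold star_eq; rewrite ?E1, ?E3; ring.
  - intros [q Hq]. subst m.
    assert (Hq : (0<q)%nat) by lia.
    pose proof five_rel as R. cbv zeta in R.
    set (a := cos (2*PI/5)) in R.
    assert (E1 : cos (2*PI*INR (1*q)/INR (q*5)) = a).
    { rewrite angle by lia. unfold a. f_equal. simpl; field. }
    assert (E4 : cos (2*PI*INR (4*q)/INR (q*5)) = a).
    { rewrite angle by lia. unfold a. rewrite <- cos2PIm. f_equal. simpl; field. }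
    assert (E2 : cos (2*PI*INR (2*q)/INR (q*5)) = 2*a^2-1).
    { rewrite angle by lia. replace (2*a^2-1) with (cos (2*(2*PI/5))) by (rewrite cos_2a_cos; unfold a; ring).
      f_equal. simpl; field. }
    assert (E3 : cos (2*PI*INR (3*q)/INR (q*5)) = 2*a^2-1).
    { rewrite angle by lia. replace (2*a^2-1) with (cos (2*(2*PI/5))) by (rewrite cos_2a_cos; unfold a; ring).
      rewrite <- (cos2PIm (2*(2*PI/5))). f_equal. simpl; field. }
    exists ((1*q,2*q)::(1*q,3*q)::(4*q,2*q)::(4*q,3*q)::
            (2*q,1*q)::(3*q,1*q)::(2*q,4*q)::(3*q,4*q)::nil)%nat.
    split; [|split].
    + repeat constructor; simpl; intuition;
      match goal with H : (_,_) = (_,_) |- _ => injection H; lia end.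
    + simpl; lia.
    + repeat apply Forall_cons; try apply Forall_nil; unfold nontrivial_sol;
      cbn [fst snd]; (split; [lia|split; [lia|split; [intro H; injection H; lia|]]]);
      unfold star_eq; rewrite ?E1, ?E2, ?E3, ?E4; nra.
Qed.
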